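(* Let $n\ge 2$, let $\tau$ be any permutation of $\{1,\dots,n\}$, let $G_n$ be the graph built from $\tau$ as in the context, and let $m$ be the vertex with $\tau(m)=1$. The greedy walk from $1$ to target $n$ in $G_n$ visits exactly: first all left-to-right minima positions of $\tau$ in increasing order from $1$ to $m$, then all right-to-left minima positions of $\tau$ strictly greater than $m$ in increasing order up to $n$. Consequently the number of steps $S_n$ of this walk satisfies \[ S_n = L_n(\tau)+R_n(\tau)-2 . \]
   Context: Vertices $V=\{1,\dots,n\}\subset\mathbb{Z}$. A permutation $\tau$ of $V$ gives insertion times: vertex $x$ is inserted at time $\tau(x)$. The undirected graph $G_n$ on $V$ is built as follows: start with no edges; for $t=1,\dots,n$, let $x$ be the vertex with $\tau(x)=t$; if some $y<x$ with $\tau(y)<t$ exists, add an edge between $x$ and the largest such $y$; if some $y>x$ with $\tau(y)<t$ exists, add an edge between $x$ and the smallest such $y$. The greedy walk toward target $n$ starts at $x_0=1$ and, from the current vertex $x\ne n$, moves to the neighbor $y$ of $x$ in $G_n$ minimizing $|y-n|$; it stops upon reaching $n$; $S_n$ is its number of moves. For a permutation $\sigma$ of $\{1,\dots,n\}$, position $i$ is a left-to-right minimum if $\sigma(i)<\min\{\sigma(1),\dots,\sigma(i-1)\}$ ($i=1$ always is), and a right-to-left minimum if $\sigma(i)<\min\{\sigma(i+1),\dots,\sigma(n)\}$ ($i=n$ always is); $L_n(\sigma)$ and $R_n(\sigma)$ are the numbers of left-to-right and right-to-left minima. *)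

(* Defs.v *)
From mathcomp Require Import all_boot.
Set Implicit Arguments. Unset Strict Implicit. Unset Printing Implicit Defensive.

(* tau is a permutation of {1,...,n} (its values outside [1,n] are irrelevant) *)
Definition is_perm (n : nat) (tau : nat -> nat) : Prop :=
  perm_eq [seq tau x | x <- iota 1 n] (iota 1 n).

(* largest y < x already inserted when x is inserted (tau y < tau x) *)
Definition left_nb (n : nat) (tau : nat -> nat) (x : nat) : option nat :=
  ohead (rev [seq y <- iota 1 n | (y < x) && (tau y < tau x)]).

(* smallest y > x already inserted when x is inserted *)
Definition right_nb (n : nat) (tau : nat -> nat) (x : nat) : option nat :=
  ohead [seq y <- iota 1 n | (x < y) && (tau y < tau x)].

(* the (undirected) edge {x,y} is added at time t: the vertex v with tau v = t
   is one endpoint and the other is its left or right neighbour at that time *)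
Definition added_at (n : nat) (tau : nat -> nat) (t x y : nat) : bool :=
  has (fun v => (tau v == t) &&
      ( ((x == v) && ((left_nb n tau v == Some y) || (right_nb n tau v == Some y)))
     || ((y == v) && ((left_nb n tau v == Some x) || (right_nb n tau v == Some x)))))
    (iota 1 n).

Definition adj (n : nat) (tau : nat -> nat) (x y : nat) : bool :=
  has (fun t => added_at n tau t x y) (iota 1 n).

Definition dist (a b : nat) : nat := (a - b) + (b - a).

(* one greedy move towards target n: the neighbour y minimizing |y - n|
   (stays put if there is no neighbour) *)
Definition greedy_step (n : nat) (tau : nat -> nat) (x : nat) : nat :=
  match [seq y <- iota 1 n | adj n tau x y] with
  | [::] => x
  | y :: ys => foldl (fun b z => if dist z n < dist b n then z else b) y ys
  end.

Definition greedy_steps (n : nat) (tau : nat -> nat) (k : nat) : Prop :=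
  iter k (greedy_step n tau) 1 = n /\
  forall j, j < k -> iter j (greedy_step n tau) 1 <> n.

Definition greedy_visits (n : nat) (tau : nat -> nat) (k : nat) : seq nat :=
  traject (greedy_step n tau) 1 k.+1.

Definition lr_min (tau : nat -> nat) (i : nat) : bool :=
  all (fun j => tau i < tau j) (iota 1 (i - 1)).

Definition rl_min (n : nat) (tau : nat -> nat) (i : nat) : bool :=
  all (fun j => tau i < tau j) (iota i.+1 (n - i)).

Definition L_n (n : nat) (tau : nat -> nat) : nat := count (lr_min tau) (iota 1 n).
Definition R_n (n : nat) (tau : nat -> nat) : nat := count (rl_min n tau) (iota 1 n).

(* Main.v *)
Require Import Defs.
From mathcomp Require Import all_boot zify.
Set Implicit Arguments. Unset Strict Implicit. Unset Printing Implicit Defensive.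

Lemma uniq_map_inj (f : nat -> nat) (s : seq nat) x y :
  uniq (map f s) -> x \in s -> y \in s -> f x = f y -> x = y.
Proof.
move=> u xs ys fxy.
have hx : index x s < size s by rewrite index_mem.
have hy : index y s < size s by rewrite index_mem.
have : nth (f 0) (map f s) (index x s) == nth (f 0) (map f s) (index y s).
  by rewrite !(nth_map 0) // !nth_index // fxy.
rewrite nth_uniq ?size_map // => /eqP e.
by rewrite -(nth_index 0 xs) -(nth_index 0 ys) e.
Qed.

Lemma oheadF (p : pred nat) a k y : ohead [seq z <- iota a k | p z] = Some y ->
  [/\ a <= y, y < a + k, p y & forall z, a <= z -> z < y -> ~~ p z].
Proof.
elim: k a => [|k IH] a //=.
case: ifP => pa /=.
  case=> <-; split => //; try lia; move=> z h1 h2; exfalso; lia.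
move/IH => [h1 h2 h3 h4]; split => //; try lia.
move=> z hz hzy; have [->|ne] := eqVneq z a; first by rewrite pa.
apply: h4 => //; lia.
Qed.

Lemma oheadR (p : pred nat) a k y : ohead (rev [seq z <- iota a k | p z]) = Some y ->
  [/\ a <= y, y < a + k, p y & forall z, y < z -> z < a + k -> ~~ p z].
Proof.
elim: k => [|k IH]; first by rewrite addn0 /=.
rewrite -addn1 iotaD filter_cat rev_cat /=.
case: ifP => pk /=.
  case=> <-; split => //; try lia; move=> z h1 h2; exfalso; lia.
move/IH => [h1 h2 h3 h4]; split => //; try lia.
move=> z hz hzy; have [->|ne] := eqVneq z (a + k); first by rewrite pk.
apply: h4 => //; lia.
Qed.

Lemma oheadF_inv (p : pred nat) a k y : a <= y -> y < a + k -> p y ->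
  (forall z, a <= z -> z < y -> ~~ p z) -> ohead [seq z <- iota a k | p z] = Some y.
Proof.
move=> h1 h2 py hz.
have : has p (iota a k) by apply/hasP; exists y => //; rewrite mem_iota h1.
rewrite has_filter; case E: [seq z <- iota a k | p z] => [|y' s] //= _.
have := @oheadF p a k y'; rewrite E => /(_ erefl) [g1 g2 g3 g4].
have [lt|gt|->] := ltngtP y' y => //.
  by have := hz y' g1 lt; rewrite g3.
by have := g4 y h1 gt; rewrite py.
Qed.

Lemma oheadR_inv (p : pred nat) a k y : a <= y -> y < a + k -> p y ->
  (forall z, y < z -> z < a + k -> ~~ p z) -> ohead (rev [seq z <- iota a k | p z]) = Some y.
Proof.
move=> h1 h2 py hz.
have : has p (iota a k) by apply/hasP; exists y => //; rewrite mem_iota h1.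
rewrite has_filter; case E: (rev [seq z <- iota a k | p z]) => [|y' s].
  by move: E => /(congr1 (@rev nat)); rewrite revK /= => ->.
move=> _ /=.
have := @oheadR p a k y'; rewrite E => /(_ erefl) [g1 g2 g3 g4].
have [lt|gt|->] := ltngtP y' y => //.
  by have := g4 y lt h2; rewrite py.
by have := hz y' gt g2; rewrite g3.
Qed.

Lemma foldl_best (d : nat -> nat) (y : nat) (ys : seq nat) :
  let z := foldl (fun b z => if d z < d b then z else b) y ys in
  z \in y :: ys /\ forall w, w \in y :: ys -> d z <= d w.
Proof.
elim: ys y => [|x ys IH] y /=.
  by split; [rewrite inE | move=> w; rewrite inE => /eqP ->].
set y' := if d x < d y then x else y.
have [h1 h2] := IH y'.
have hy' : d y' <= d y /\ d y' <= d x by rewrite /y'; case: ifP => h; lia.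
split.
  move: h1; rewrite !inE /y'; case: ifP => _ /orP [->|->]; rewrite ?orbT //.
move=> w; rewrite !inE => /orP [/eqP ->|/orP [/eqP ->| hw]].
- have := h2 y'; rewrite inE eqxx => /(_ isT); lia.
- have := h2 y'; rewrite inE eqxx => /(_ isT); lia.
- by apply: h2; rewrite inE hw orbT.
Qed.

Lemma path_fi (p : pred nat) (r : rel nat) x a k : p x -> x < a ->
  (forall z, x < z -> z < a -> ~~ p z) ->
  (forall a' b, x <= a' -> p a' -> a' < b -> b < a + k -> p b ->
     (forall z, a' < z -> z < b -> ~~ p z) -> r a' b) ->
  path r x [seq z <- iota a k | p z].
Proof.
elim: k x a => [|k IH] x a px xa hb hr //=.
case: ifP => pa /=.
  apply/andP; split.
    apply: hr => //; lia.
  apply: IH => //; first (move=> z h1 h2; exfalso; lia).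
  move=> a' b h1 h2 h3 h4 h5 h6; apply: hr => //; lia.
apply: IH => //.
- lia.
- move=> z h1 h2; have [->|ne] := eqVneq z a; first by rewrite pa.
  apply: hb => //; lia.
- move=> a' b h1 h2 h3 h4 h5 h6; apply: hr => //; lia.
Qed.

Lemma fpath_traject (f : nat -> nat) x p : fpath f x p -> x :: p = traject f x (size p).+1.
Proof.
elim: p x => [|y p IH] x //=.
case/andP => /eqP <- hp.
by rewrite (IH _ hp).
Qed.

Lemma argmin (f : nat -> nat) a k : 0 < k ->
  exists w, a <= w < a + k /\ forall j, a <= j -> j < a + k -> f w <= f j.
Proof.
elim: k => [|k IH] // _.
case: k IH => [|k] IH.
  exists a; split; first lia. move=> j h1 h2; have -> : j = a by lia. done.
have [w [hw hmin]] := IH isT.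
case: (leqP (f w) (f (a + k.+1))) => h.
  exists w; split; first lia.
  move=> j h1 h2; have [->|ne] := eqVneq j (a + k.+1) => //.
  apply: hmin => //; lia.
exists (a + k.+1); split; first lia.
move=> j h1 h2; have [->|ne] := eqVneq j (a + k.+1) => //.
have := hmin j h1; lia.
Qed.

Section Walk.
Variables (n : nat) (tau : nat -> nat) (m : nat).
Hypothesis n2 : 2 <= n.
Hypothesis hp : is_perm n tau.
Hypothesis hm : 1 <= m <= n.
Hypothesis tm : tau m = 1.

Lemma tau_rng x : 1 <= x <= n -> 1 <= tau x <= n.
Proof.
move=> hx.
have : tau x \in [seq tau x | x <- iota 1 n] by apply: map_f; rewrite mem_iota; lia.
rewrite (perm_mem hp) mem_iota; lia.
Qed.

Lemma tau_inj x y : 1 <= x <= n -> 1 <= y <= n -> tau x = tau y -> x = y.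
Proof.
move=> hx hy e.
apply: (@uniq_map_inj tau (iota 1 n)) => //.
- by rewrite (perm_uniq hp) iota_uniq.
- rewrite mem_iota; lia.
- rewrite mem_iota; lia.
Qed.

Lemma lrP i j : lr_min tau i -> 1 <= j < i -> tau i < tau j.
Proof. move=> /allP h hj; apply: h; rewrite mem_iota; lia. Qed.

Lemma lrI i : (forall j, 1 <= j < i -> tau i < tau j) -> lr_min tau i.
Proof. move=> h; apply/allP => j; rewrite mem_iota => hj; apply: h; lia. Qed.

Lemma rlP i j : rl_min n tau i -> i < j <= n -> tau i < tau j.
Proof. move=> /allP h hj; apply: h; rewrite mem_iota; lia. Qed.

Lemma rlI i : (forall j, i < j <= n -> tau i < tau j) -> rl_min n tau i.
Proof. move=> h; apply/allP => j; rewrite mem_iota => hj; apply: h; lia. Qed.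

Lemma tau_gt1 j : 1 <= j <= n -> j != m -> 1 < tau j.
Proof.
move=> hj ne; have := tau_rng hj.
have : tau j != tau m by apply/eqP => /(tau_inj hj hm) /eqP; rewrite (negbTE ne).
rewrite tm; lia.
Qed.

Lemma lr_m : lr_min tau m.
Proof. apply: lrI => j hj; rewrite tm; apply: tau_gt1; lia. Qed.

Lemma rl_m : rl_min n tau m.
Proof. apply: rlI => j hj; rewrite tm; apply: tau_gt1; lia. Qed.

Lemma lnbF x y : left_nb n tau x = Some y ->
  [/\ 1 <= y, y < x, y <= n, tau y < tau x &
      forall z, y < z -> z < x -> z <= n -> ~~ (tau z < tau x)].
Proof.
rewrite /left_nb => /oheadR [h1 h2 /andP [h3 h4] h5]; split => //; try lia.
move=> z hz hzx hzn; have := h5 z hz; rewrite hzx /=; apply; lia.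
Qed.

Lemma lnbI x y : 1 <= y -> y < x -> x <= n -> tau y < tau x ->
  (forall z, y < z -> z < x -> ~~ (tau z < tau x)) -> left_nb n tau x = Some y.
Proof.
move=> h1 h2 h3 h4 h5; apply: oheadR_inv => //; try lia.
- move=> z hz hzn /=; case: (ltnP z x) => hzx //=; exact: h5.
Qed.

Lemma rnbF x y : right_nb n tau x = Some y ->
  [/\ x < y, 1 <= y, y <= n, tau y < tau x &
      forall z, x < z -> z < y -> ~~ (tau z < tau x)].
Proof.
rewrite /right_nb => /oheadF [h1 h2 /andP [h3 h4] h5]; split => //; try lia.
move=> z hz hzy; have := h5 z; rewrite hz /=; apply => //; lia.
Qed.

Lemma adjE x y : adj n tau x y -> exists v, 1 <= v <= n /\
  ((x = v /\ (left_nb n tau v = Some y \/ right_nb n tau v = Some y)) \/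
   (y = v /\ (left_nb n tau v = Some x \/ right_nb n tau v = Some x))).
Proof.
case/hasP => t _ /hasP [v vin /andP [_ H]].
exists v; split; first by move: vin; rewrite mem_iota; lia.
case/orP: H => /andP [/eqP -> /orP [/eqP h|/eqP h]]; tauto.
Qed.

Lemma adjI x y v : 1 <= v <= n ->
  ((x = v /\ (left_nb n tau v = Some y \/ right_nb n tau v = Some y)) \/
   (y = v /\ (left_nb n tau v = Some x \/ right_nb n tau v = Some x))) ->
  adj n tau x y.
Proof.
move=> hv H; apply/hasP; exists (tau v).
  rewrite mem_iota; have := tau_rng hv; lia.
apply/hasP; exists v; first by rewrite mem_iota; lia.
rewrite eqxx /=.
case: H => [[-> [->|->]]|[-> [->|->]]]; rewrite ?eqxx ?orbT //.
Qed.

Lemma gstep x b : 1 <= b <= n -> adj n tau x b ->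
  (forall y, 1 <= y <= n -> adj n tau x y -> y <= b) -> greedy_step n tau x = b.
Proof.
move=> hb ab hmax; rewrite /greedy_step.
have hin : b \in [seq y <- iota 1 n | adj n tau x y].
  by rewrite mem_filter ab mem_iota; lia.
have hall : forall y, y \in [seq y <- iota 1 n | adj n tau x y] -> 1 <= y <= n /\ y <= b.
  move=> y; rewrite mem_filter mem_iota => /andP [a1 a2].
  split; first lia. apply: hmax => //; lia.
move: hin hall; case: [seq y <- iota 1 n | adj n tau x y] => [|y ys] // hin hall.
have [h1 h2] := foldl_best (fun z => dist z n) y ys.
move: h1 h2 => /=.
set z := foldl _ y ys => h1 h2.
have := h2 b hin; have := hall z h1; have := hall b hin.
rewrite /dist; lia.
Qed.


Definition P (z : nat) : bool := if z <= m then lr_min tau z else rl_min n tau z.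

Lemma step a b : 1 <= a -> b <= n -> a < b -> P a -> P b ->
  (forall z, a < z -> z < b -> ~~ P z) -> greedy_step n tau a = b.
Proof.
move=> a1 bn ab Pa Pb hbt.
case: (leqP b m) => bm.
  have am : a <= m by lia.
  move: Pa Pb; rewrite /P am bm => la lb.
  have tba : tau b < tau a by apply: lrP => //; lia.
  have [y ey] : exists y, right_nb n tau a = Some y.
    rewrite /right_nb.
    have : has (fun y => (a < y) && (tau y < tau a)) (iota 1 n).
      by apply/hasP; exists b; [rewrite mem_iota; lia | apply/andP].
    rewrite has_filter; case: [seq _ <- _ | _] => [|y s] //= _; by exists y.
  have [ay y1 yn tya hy] := rnbF ey.
  have yb : y <= b.
    by case: (leqP y b) => // by_; have := hy b ab by_; rewrite tba.
  have ly : lr_min tau y.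
    apply: lrI => j hj.
    case: (ltngtP j a) => hja.
    - have := lrP la (j:=j); lia.
    - have := hy j hja; lia.
    - by rewrite hja.
  have ey' : y = b.
    have [yb'|yb'|->] := ltngtP y b; [|lia|done].
    have := hbt y ay yb'; rewrite /P; have -> : y <= m by lia. by rewrite ly.
  subst y.
  apply: gstep; first lia.
    apply: (@adjI _ _ a); first lia. by left; split => //; right.
  move=> y' hy' /adjE [v [hv [[ev [h|h]]|[ev [h|h]]]]]; subst.
  - have [] := lnbF h; lia.
  - by move: h; rewrite ey => [[->]].
  - have [g1 g2 g3 g4 g5] := lnbF h.
    case: (leqP v b) => // bv.
    have := g5 b ab bv bn; lia.
  - have [] := rnbF h; lia.
have ma : m <= a.
  case: (leqP m a) => // am.
  have := hbt m am bm; rewrite /P leqnn lr_m.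
  done.
have ra : rl_min n tau a.
  have [<-|ne] := eqVneq m a; first exact: rl_m.
  by move: Pa; rewrite /P; have -> : (a <= m) = false by lia.
have rb : rl_min n tau b.
  by move: Pb; rewrite /P; have -> : (b <= m) = false by lia.
have tab : tau a < tau b by apply: rlP => //; lia.
apply: gstep; first lia.
  apply: (@adjI _ _ b); first lia. right; split => //; left.
  apply: lnbI => //; try lia.
  move=> z az zb; apply/negP => tzb.
  have [w [hw wmin]] := @argmin tau z (n - z).+1 isT.
  have rw : rl_min n tau w.
    apply: rlI => j hj.
    have := wmin j; have ne : w != j by lia.
    have : tau w != tau j.
      apply/eqP => /tau_inj e; move: ne; rewrite e //; lia.
    move=> ne' h; have := h (ltac:(lia)) (ltac:(lia)); lia.
  have twz := wmin z (leqnn z) (ltac:(lia)).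
  have wb : w < b.
    have [//|hwb|ewb] := ltngtP w b.
    - have := rlP rb (j:=w); lia.
    - move: tzb twz; rewrite ewb; lia.
  have := hbt w (ltac:(lia)) wb; rewrite /P; have -> : (w <= m) = false by lia.
  by rewrite rw.
move=> y' hy' /adjE [v [hv [[ev [h|h]]|[ev [h|h]]]]]; subst.
- have [] := lnbF h; lia.
- have [g1 g2 g3 g4 g5] := rnbF h; have := rlP ra (j:=y'); lia.
- have [g1 g2 g3 g4 g5] := lnbF h.
  case: (leqP v b) => // bv.
  have := g5 b ab bv (ltac:(lia)); have := rlP rb (j:=v); lia.
- have [] := rnbF h; lia.
Qed.


Lemma main : greedy_visits n tau (L_n n tau + R_n n tau - 2) =
    [seq i <- iota 1 n | lr_min tau i] ++ [seq i <- iota m.+1 (n - m) | rl_min n tau i]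
  /\ greedy_steps n tau (L_n n tau + R_n n tau - 2).
Proof.
have mn : m <= n by case/andP: hm.
have m1 : 0 < m by case/andP: hm.
have isplit : iota 1 n = iota 1 m ++ iota m.+1 (n - m).
  by rewrite -{1}(subnKC mn) iotaD add1n.
have nolr : [seq i <- iota m.+1 (n - m) | lr_min tau i] = [::].
  apply/eqP; rewrite -[_ == _]negbK -has_filter; apply/hasPn => z0.
  have [z ->] : exists z : nat, z0 = z by exists z0.
  rewrite mem_iota => hz; apply/negP => lz; have := @tau_rng z (ltac:(lia)); have := lrP lz (j:=m); rewrite tm; lia.
have W1 : [seq i <- iota 1 n | lr_min tau i] ++ [seq i <- iota m.+1 (n - m) | rl_min n tau i]
          = [seq z <- iota 1 n | P z].
  rewrite isplit !filter_cat nolr cats0; congr (_ ++ _).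
  - apply: eq_in_filter => z0 hz; have [z e] : exists z : nat, z0 = z by exists z0. subst z0; move: hz; rewrite mem_iota /P => hz; have -> : z <= m by lia. done.
  - apply: eq_in_filter => z0 hz; have [z e] : exists z : nat, z0 = z by exists z0. subst z0; move: hz; rewrite mem_iota /P => hz; have -> : (z <= m) = false by lia. done.
have cntR : count (rl_min n tau) (iota 1 m) = 1.
  have e : m = m.-1 + 1 by lia.
  rewrite {1}e iotaD count_cat /=.
  have -> : 1 + m.-1 = m by lia.
  rewrite rl_m (@eq_in_count _ _ pred0) ?count_pred0 // => z0.
  have [z ->] : exists z : nat, z0 = z by exists z0.
  rewrite mem_iota => hz /=; apply/negP => r; have := @tau_rng z (ltac:(lia)); have := rlP r (j:=m); rewrite tm; lia.
have c0 : count (lr_min tau) (iota m.+1 (n - m)) = 0 by rewrite -size_filter nolr.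
have lr1 : lr_min tau 1 by apply: lrI => j hj; lia.
have A1 : 0 < count (lr_min tau) (iota 1 m).
  rewrite -has_count; apply/hasP; exists 1 => //; rewrite mem_iota; lia.
have sz : size [seq z <- iota 1 n | P z] = (L_n n tau + R_n n tau - 2).+1.
  rewrite -W1 size_cat !size_filter /L_n /R_n isplit !count_cat cntR c0.
  move: A1; set A := count _ (iota 1 m); set B := count _ (iota m.+1 (n - m)).
  change (count (rl_min n tau) (iota m.+1 (n - m))) with B; lia.
set k := L_n n tau + R_n n tau - 2.
set g := greedy_step n tau.
have P1 : P 1 by rewrite /P m1.
have Pn : P n.
  rewrite /P; case: (leqP n m) => h.
    have -> : n = m by lia. exact: lr_m.
  by apply: rlI => j hj; lia.
have e1 : n = (n - 1).+1 by lia.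
have iE : iota 1 n = 1 :: iota 2 (n - 1) by rewrite {1}e1.
have fp : fpath g 1 [seq z <- iota 2 (n - 1) | P z].
  apply: path_fi => //; first (move=> z h1 h2; exfalso; lia).
  move=> a' b h1 h2 h3 h4 h5 h6; apply/eqP; apply: step => //; lia.
have tr := fpath_traject fp.
have Wt : [seq z <- iota 1 n | P z] = traject g 1 k.+1.
  have szk : size [seq z <- iota 2 (n - 1) | P z] = k by move: sz; rewrite iE /= P1 => [[]].
  by rewrite iE /= P1 tr szk.
split; first by rewrite /greedy_visits W1 Wt.
have e2 : n = (n - 1) + 1 by lia.
have iE2 : iota 1 n = iota 1 (n - 1) ++ [:: n].
  rewrite {1}e2 iotaD; congr (_ ++ _); rewrite /=; congr [:: _]; lia.
have Wr : [seq z <- iota 1 n | P z] = rcons [seq z <- iota 1 (n - 1) | P z] n.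
  by rewrite iE2 filter_cat /= Pn cats1.
set W' := [seq z <- iota 1 (n - 1) | P z] in Wr.
have szW' : size W' = k by move: sz; rewrite Wr size_rcons => [[]].
have itE : forall j, j <= k -> iter j g 1 = nth 1 (rcons W' n) j.
  by move=> j hj; rewrite -Wr Wt nth_traject.
split.
  by rewrite itE // nth_rcons szW' ltnn eqxx.
move=> j jk; rewrite itE; last lia.
rewrite nth_rcons szW' jk.
have : nth 1 W' j \in W' by rewrite mem_nth // szW'.
rewrite mem_filter mem_iota => /andP [_ h] e; rewrite e in h; lia.
Qed.

End Walk.

Theorem theorem1 (n : nat) (tau : nat -> nat) (m : nat) :
  2 <= n -> is_perm n tau -> 1 <= m <= n -> tau m = 1 ->
  greedy_visits n tau (L_n n tau + R_n n tau - 2) =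
    [seq i <- iota 1 n | lr_min tau i] ++ [seq i <- iota m.+1 (n - m) | rl_min n tau i]
  /\ greedy_steps n tau (L_n n tau + R_n n tau - 2).
Proof. move=> h1 h2 h3 h4; exact: main. Qed.
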